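(* Let $n\ge 3$ be odd and let $a_0,a_1,\dots,a_{n-1}\in\mathbb{R}$. Let $A'$ be the $n\times n$ matrix with rows and columns indexed by $0,\dots,n-1$ (modulo $n$) with entries $(A')_{j,j+1}=a_{j+1}$, $(A')_{j,j-1}=-a_{j-1}$ (indices mod $n$) and all other entries zero, and let $\mathcal A(x)=\det(xI-A')$. If $a_0<0$, $a_k>0$ for all $k\neq0$, and $a_0+a_2<0$, then $$\mathcal A\big(\sqrt{-a_1(a_0+a_2)}\big)<0 .$$
   Context: For example, for $n$ odd the first row of $A'$ is $(0,a_1,0,\dots,0,-a_{n-1})$ and the last row is $(a_0,0,\dots,0,-a_{n-2},0)$. *)

(* Defs.v *)
From mathcomp Require Import all_boot all_order all_algebra.
Set Implicit Arguments. Unset Strict Implicit. Unset Printing Implicit Defensive.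
Import Order.TTheory GRing.Theory Num.Theory.
Local Open Scope ring_scope.

(* The n x n matrix A' with rows/columns indexed by 0..n-1 (mod n):
   (A')_{j,j+1} = a_{j+1}, (A')_{j,j-1} = -a_{j-1}, other entries 0.
   Entry (i,j) is a_j if j = i+1 (mod n), and -a_j if j = i-1 (mod n),
   i.e. if j+1 = i (mod n).  (For n >= 3 these two cases are disjoint.) *)
Definition Aprime (R : pzRingType) (n : nat) (a : nat -> R) : 'M[R]_n :=
  \matrix_(i, j) (if (j : nat) == (i.+1 %% n)%N then a j
                  else if ((j.+1 %% n)%N == i) then - a j else 0).

(* Main.v *)
Require Import Defs.
From mathcomp Require Import all_boot all_order all_algebra.
From mathcomp Require Import zify ring lra.
Import Order.TTheory GRing.Theory Num.Theory.
Local Open Scope ring_scope.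


Definition tri {R : rcfType} m (d u l : nat -> R) : 'M[R]_m :=
  \matrix_(i, j) (if (i : nat) == j then d i else if (j : nat) == i.+1 then u i
     else if (i : nat) == j.+1 then l j else 0).

Lemma tri_shift {R : rcfType} m (d u l : nat -> R) :
  row' ord0 (col' ord0 (tri m.+1 d u l)) =
  tri m (fun k => d k.+1) (fun k => u k.+1) (fun k => l k.+1).
Proof. by apply/matrixP => i j; rewrite !mxE /=. Qed.

Lemma det_tri {R : rcfType} m (d u l : nat -> R) : \det (tri m.+2 d u l) =
  d 0%N * \det (tri m.+1 (fun k => d k.+1) (fun k => u k.+1) (fun k => l k.+1))
  - u 0%N * l 0%N * \det (tri m (fun k => d k.+2) (fun k => u k.+2) (fun k => l k.+2)).
Proof.
rewrite (expand_det_row _ ord0) big_ord_recl big_ord_recl big1 ?addr0; last first.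
  by move=> i _; rewrite !mxE /= mul0r.
rewrite /cofactor tri_shift !mxE /= expr0 mul1r; congr (_ + _).
rewrite (expand_det_col _ ord0) big_ord_recl big1 ?addr0; last first.
  by move=> i _; rewrite !mxE /= mul0r.
rewrite !mxE /= /cofactor /= expr0 mul1r expr1.
have -> : row' ord0 (col' ord0 (row' ord0 (col' (lift ord0 ord0) (tri m.+2 d u l)))) =
  tri m (fun k => d k.+2) (fun k => u k.+2) (fun k => l k.+2).
  by apply/matrixP => i j; rewrite !mxE /=.
by rewrite /bump /= mulN1r mulrN mulrA.
Qed.

Lemma tri_pos {R : rcfType} m x (u l : nat -> R) : 0 < x ->
  (forall k, (k.+1 < m)%N -> u k * l k < 0) -> 0 < \det (tri m (fun _ => x) u l).
Proof.
move=> x0; elim/ltn_ind: m u l => [[|[|m]]] IH u l H.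
- by rewrite det_mx00.
- by rewrite det_mx11 mxE.
rewrite det_tri.
have h2 := IH m.+1 (ltnSn _) (fun k => u k.+1) (fun k => l k.+1) (fun k hk => H k.+1 hk).
have h4 := IH m (leqnSn _) (fun k => u k.+2) (fun k => l k.+2)
   (fun k hk => H k.+2 hk).
have := H 0%N isT => h5.
have : 0 < x * \det (tri m.+1 (fun _ => x) (fun k => u k.+1) (fun k => l k.+1)) by apply: mulr_gt0.
have : 0 < - (u 0%N * l 0%N) * \det (tri m (fun _ => x) (fun k => u k.+2) (fun k => l k.+2)).
  by apply: mulr_gt0 => //; rewrite oppr_gt0.
rewrite mulNr; lra.
Qed.

Lemma tri_ge {R : rcfType} m x (u l : nat -> R) : 0 < x ->
  (forall k, (k.+1 < m.+1)%N -> u k * l k < 0) ->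
  x * \det (tri m (fun _ => x) (fun k => u k.+1) (fun k => l k.+1))
    <= \det (tri m.+1 (fun _ => x) u l).
Proof.
case: m => [|m] x0 H; first by rewrite det_mx00 det_mx11 mxE /= mulr1.
rewrite det_tri.
have h : 0 <= - (u 0%N * l 0%N) * \det (tri m (fun _ => x) (fun k => u k.+2) (fun k => l k.+2)).
  apply: mulr_ge0; first by rewrite oppr_ge0 ltW // H.
  by apply/ltW/tri_pos => // k hk; apply: H.
rewrite mulNr in h; lra.
Qed.

Lemma tri_trunc {R : rcfType} m (d u l : nat -> R) :
  row' ord_max (col' ord_max (tri m.+1 d u l)) = tri m d u l.
Proof. by apply/matrixP => i j; rewrite !mxE !lift_max. Qed.

Lemma tri_corner1 {R : rcfType} m (d u l : nat -> R) :
  \det (row' ord_max (col' ord0 (tri m.+2 d u l))) = \prod_(i < m.+1) u i.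
Proof.
rewrite det_trig; last first.
  apply/is_trig_mxP => -[i hi] [j hj] /= lij; rewrite !mxE lift_max lift0 /=.
  case: eqP => [h|_]; first by exfalso; move: lij h; lia.
  case: eqP => [h|_]; first by exfalso; move: lij h; lia.
  case: eqP => // h; exfalso; move: lij h; lia.
apply: eq_bigr => i _; rewrite !mxE lift_max lift0 /= eqxx; case: eqP => // h; exfalso; move: h; lia.
Qed.

Lemma tri_corner2 {R : rcfType} m (d u l : nat -> R) :
  \det (row' ord0 (col' ord_max (tri m.+2 d u l))) = \prod_(i < m.+1) l i.
Proof.
rewrite -det_tr det_trig; last first.
  apply/is_trig_mxP => -[i hi] [j hj] /= lij; rewrite !mxE lift_max lift0 /=.
  case: eqP => [h|_]; first by exfalso; move: lij h; lia.
  case: eqP => [h|_]; first by exfalso; move: lij h; lia.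
  case: eqP => // h; exfalso; move: lij h; lia.
apply: eq_bigr => i _; rewrite !mxE lift_max lift0 /=.
rewrite eqxx; case: eqP => h; first by exfalso; move: h; lia. by case: eqP => // h2; exfalso; move: h2; lia.
Qed.

Lemma det_border {R : rcfType} k (M : 'M[R]_k.+2) : \det M =
  M ord0 ord0 * \det (row' ord0 (col' ord0 M)) -
  \sum_(j < k.+1) \sum_(i < k.+1)
     M ord0 (lift ord0 j) * M (lift ord0 i) ord0 * cofactor (row' ord0 (col' ord0 M)) i j.
Proof.
rewrite (expand_det_row _ ord0) big_ord_recl /cofactor /= expr0 mul1r -sumrN.
congr (_ + _); apply: eq_bigr => j _.
rewrite (expand_det_col _ ord0) mulrA mulr_sumr -sumrN.
apply: eq_bigr => i _; rewrite /cofactor !mxE.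
have -> : lift (lift ord0 j) (ord0 : 'I_k.+1) = ord0 by apply: val_inj.
have -> : row' i (col' ord0 (row' ord0 (col' (lift ord0 j) M))) =
          row' i (col' j (row' ord0 (col' ord0 M))).
  apply/matrixP => a b; rewrite !mxE; congr (M _ _); apply: val_inj => /=.
  by rewrite /bump /=; lia.
rewrite /= /bump /= !addn0 !add0n exprS exprD; ring.
Qed.

Lemma modS2 m i : (i < m.+2)%N -> (i.+2 %% m.+3 = if i == m.+1 then 0 else i.+2)%N.
Proof.
move=> hi; case: eqP => [->|h]; first by rewrite modnn.
by rewrite modn_small //; lia.
Qed.

Lemma T_eq (R : rcfType) m (a : nat -> R) x :
  row' ord0 (col' ord0 (x%:M - Aprime m.+3 a)) =
  tri m.+2 (fun _ => x) (fun k => - a k.+2) (fun k => a k.+1).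
Proof.
apply/matrixP => -[i hi] [j hj]; rewrite !mxE /= !modS2 // -val_eqE /= /bump /= !add1n eqSS.
case: (boolP (i == m.+1)) => hi1; case: (boolP (j == m.+1)) => hj1;
  rewrite ?hi1 ?hj1 ?(negbTE hi1) ?(negbTE hj1);
  case: (eqVneq i j) => [eij|ij]; try subst j; rewrite ?eqxx ?(negbTE ij) ?mulr1n ?mulr0n ?sub0r;
  repeat (case: eqP => ? //=); try (exfalso; lia); rewrite ?subr0 ?opprK ?oppr0 //; try (congr (- a _); lia).

Qed.

Lemma eval_char (R : rcfType) n (A : 'M[R]_n) x :
  (char_poly A).[x] = \det (x%:M - A).
Proof.
rewrite /char_poly -horner_evalE -det_map_mx; congr (\det _); apply/matrixP => i j.
by rewrite !mxE /= horner_evalE hornerD hornerN hornerMn hornerX hornerC.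
Qed.

Lemma sum22 (R : rcfType) m (r c : 'I_m.+2 -> R) (F : 'I_m.+2 -> 'I_m.+2 -> R) :
  (forall j, j != ord0 -> j != ord_max -> r j = 0) ->
  (forall j, j != ord0 -> j != ord_max -> c j = 0) ->
  \sum_j \sum_i r j * c i * F i j =
  r ord0 * c ord0 * F ord0 ord0 + r ord0 * c ord_max * F ord_max ord0
  + (r ord_max * c ord0 * F ord0 ord_max + r ord_max * c ord_max * F ord_max ord_max).
Proof.
move=> hr hc.
have inner j : \sum_i r j * c i * F i j = r j * c ord0 * F ord0 j + r j * c ord_max * F ord_max j.
  rewrite (bigD1 ord0) //= (bigD1 ord_max) //= big1 ?addr0 ?addrA // => i /andP[h1 h2].
  by rewrite hc ?mulr0 ?mul0r.
rewrite (eq_bigr _ (fun j _ => inner j)).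
rewrite (bigD1 ord0) //= (bigD1 ord_max) //= big1 ?addr0 ?addrA // => j /andP[h1 h2].
by rewrite hr ?mul0r ?addr0.
Qed.

Lemma r_val (R : rcfType) m (a : nat -> R) x (j : 'I_m.+2) :
  (x%:M - Aprime m.+3 a) ord0 (lift ord0 j) =
  if (j : nat) == 0%N then - a 1%N else if (j : nat) == m.+1 then a m.+2 else 0.
Proof.
case: j => j hj; rewrite !mxE /= /bump /= add1n (modn_small (_ : 1 < m.+3)%N) // modS2 // mulr0n sub0r.
case: (boolP (_ == m.+1)) => h1; rewrite ?h1 ?(negbTE h1);
repeat (case: eqP => ? //=); try (exfalso; lia); rewrite ?subr0 ?sub0r ?opprK ?oppr0 //;
 try (congr (- a _); lia); try (congr (a _); lia).
Qed.

Lemma c_val (R : rcfType) m (a : nat -> R) x (i : 'I_m.+2) :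
  (x%:M - Aprime m.+3 a) (lift ord0 i) ord0 =
  if (i : nat) == 0%N then a 0%N else if (i : nat) == m.+1 then - a 0%N else 0.
Proof.
case: i => i hi; rewrite !mxE /= /bump /= add1n (modn_small (_ : 1 < m.+3)%N) // modS2 // mulr0n sub0r.
case: (boolP (_ == m.+1)) => h1; rewrite ?h1 ?(negbTE h1);
repeat (case: eqP => ? //=); try (exfalso; lia); rewrite ?subr0 ?sub0r ?opprK ?oppr0 //;
 try (congr (- a _); lia); try (congr (a _); lia).
Qed.

Theorem lemma2 (R : rcfType) (n : nat) (a : nat -> R) :
  (3 <= n)%N -> odd n ->
  a 0%N < 0 ->
  (forall k : nat, (0 < k < n)%N -> 0 < a k) ->
  a 0%N + a 2%N < 0 ->
  (char_poly (Aprime n a)).[Num.sqrt (- (a 1%N * (a 0%N + a 2%N)))] < 0.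
Proof.
case: n => [|[|[|m]]] // _ hodd ha0 hpos ha02.
set x := Num.sqrt _.
have ha1 : 0 < a 1%N by apply: hpos.
have ha2 : 0 < a 2%N by apply: hpos.
have hy : 0 < - (a 1%N * (a 0%N + a 2%N)).
  by rewrite oppr_gt0 pmulr_rlt0.
have hx : 0 < x by rewrite sqrtr_gt0.
have hx2 : x * x = - (a 1%N * (a 0%N + a 2%N)).
  by rewrite -expr2 sqr_sqrtr // ltW.
rewrite eval_char det_border T_eq.
rewrite (@sum22 R m (fun j => (x%:M - Aprime m.+3 a) ord0 (lift ord0 j))
               (fun i => (x%:M - Aprime m.+3 a) (lift ord0 i) ord0)); last first.
- by move=> j h1 h2; rewrite /= c_val; case: eqP => [h|_]; [case/eqP: h1; apply: val_inj | case: eqP => // h; case/eqP: h2; apply: val_inj].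
- by move=> j h1 h2; rewrite /= r_val; case: eqP => [h|_]; [case/eqP: h1; apply: val_inj | case: eqP => // h; case/eqP: h2; apply: val_inj].
rewrite /= !r_val !c_val /= eqxx.
have -> : (x%:M - Aprime m.+3 a) ord0 ord0 = x.
  by rewrite !mxE /= mulr1n subr0.
rewrite /cofactor tri_shift tri_trunc tri_corner1 tri_corner2 det_tri /=.
rewrite prodrN card_ord.
have hs : (-1) ^+ m.+1 = -1 :> R.
  by rewrite -signr_odd; move: hodd => /=; rewrite negbK => ->.
rewrite !add0n !addn0 hs !expr0 !mul1r.
set D1 := \det (tri m.+1 _ _ _).
set D2 := \det (tri m _ _ _).
set D' := \det (tri m.+1 _ _ _).
set P := \prod_(i < m.+1) a i.+2.
set Q := \prod_(i < m.+1) a i.+1.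
have hprod : a 1%N * P = a m.+2 * Q.
  transitivity (\prod_(i < m.+2) a i.+1).
    by rewrite big_ord_recl.
  by rewrite big_ord_recr mulrC.
rewrite exprD hs.
have negu k : (0 < k)%N -> (k.+1 < m.+3)%N -> - a k.+1 * a k < 0.
  move=> hk0 hk; rewrite mulNr oppr_lt0.
  by apply: mulr_gt0; apply: hpos; lia.
have h1 : x * D2 <= D1.
  by apply: (@tri_ge R m x (fun k => - a k.+3) (fun k => a k.+2)) => // k hk; apply: negu; lia.
have h2 : 0 < D'.
  by apply: tri_pos => // k hk; apply: negu; lia.
have ham : 0 < a m.+2 by apply: hpos; lia.
have h3 : a 1%N * a 2%N * (x * D2 - D1) <= 0.
  by rewrite pmulr_rle0 ?mulr_gt0 // subr_le0.
have h4 : a 0%N * a m.+2 * D' < 0.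
  by rewrite pmulr_llt0 // nmulr_rlt0.
have hx2' : x * x * D1 = - (a 1%N * (a 0%N + a 2%N)) * D1 by rewrite hx2.
have hprod' : a 0%N * (a 1%N * P) = a 0%N * (a m.+2 * Q) by rewrite hprod.
lra.
Qed.
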